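(* Let $p$ be a prime and $b$ an integer with $0<b\le b^{-1}<p$. Write $p=bq+r$ with $0\le r<b$ and $p=b^{-1}s+t$ with $0\le t<b^{-1}$ (division algorithm). Then $\mathrm{inv}_{1,b}$ contains $$\{x_1^{p-kb}x_2^k\mid 0\le k\le q\}\cup\{x_1^mx_2^{p-mb^{-1}}\mid 0\le m\le s\}.$$
   Context: Let $S=\mathbb{C}[x_1,x_2]$, $\zeta=e^{2\pi i/p}$, $G=\mathbb{Z}/p\mathbb{Z}=\langle\zeta\rangle$ acting on $S$ by $x_1\mapsto\zeta x_1$, $x_2\mapsto\zeta^bx_2$. $S^G_{1,b}$ is the invariant ring; a monomial $x_1^cx_2^d$ lies in it iff $c+bd\equiv0\pmod p$. $\mathrm{inv}_{1,b}$ denotes the minimal set of monomial generators of $S^G_{1,b}$ as a $\mathbb{C}$-algebra: the nonconstant invariant monomials that are not a product of two nonconstant invariant monomials. $b^{-1}$ is the unique integer $0<b^{-1}<p$ with $bb^{-1}\equiv1\pmod p$. *)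

(* Defs.v *)
From mathcomp Require Import all_boot.
Set Implicit Arguments. Unset Strict Implicit. Unset Printing Implicit Defensive.

(* A monomial x1^c x2^d of S = C[x1,x2] is represented by its exponent
   pair (c, d) : nat * nat; multiplying monomials adds exponent pairs. *)
Definition monomial := (nat * nat)%type.

Definition mon_mul (e f : monomial) : monomial := (e.1 + f.1, e.2 + f.2).

(* x1^c x2^d is invariant under Z/p acting by x1 -> z x1, x2 -> z^b x2
   iff c + b d = 0 (mod p). *)
Definition invariant_mon (p b : nat) (e : monomial) : bool :=
  (e.1 + b * e.2) %% p == 0.

Definition nonconstant (e : monomial) : bool := e != (0, 0).

Definition in_inv (p b : nat) (e : monomial) : Prop :=
  [/\ invariant_mon p b e, nonconstant e &
      ~ exists f g : monomial,
          [/\ invariant_mon p b f, nonconstant f,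
              invariant_mon p b g, nonconstant g & e = mon_mul f g]].

(* Main.v *)
Require Import Defs.
From mathcomp Require Import all_boot zify.

Lemma pos_w (a c : nat) (f : monomial) : 0 < a -> 0 < c -> nonconstant f -> 0 < a * f.1 + c * f.2.
Proof.
case: f => [f1 f2] /= Ha Hc; rewrite /nonconstant.
case: f1 => [|f1]; case: f2 => [|f2] //= _; nia.
Qed.

Lemma nodec (p b a c : nat) (e : monomial) : 0 < a -> 0 < c -> a * e.1 + c * e.2 = p ->
  (forall f, invariant_mon p b f -> p %| a * f.1 + c * f.2) ->
  ~ exists f g : monomial,
          [/\ invariant_mon p b f, nonconstant f,
              invariant_mon p b g, nonconstant g & e = mon_mul f g].
Proof.
move=> Ha Hc Hw Hd [f [g [If Nf Ig Ng E]]].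
have pf := @pos_w a c f Ha Hc Nf; have pg := @pos_w a c g Ha Hc Ng.
have l1 := dvdn_leq pf (Hd _ If); have l2 := dvdn_leq pg (Hd _ Ig).
move: Hw l1 l2 pf pg; rewrite E /mon_mul; clear.
case: f => f1 f2; case: g => g1 g2 /=.
nia.
Qed.

Theorem lemma3p7 (p b binv : nat) :
  prime p ->
  0 < binv < p -> b * binv %% p = 1 ->
  0 < b -> b <= binv ->
  forall e : monomial,
    (exists k, k <= p %/ b /\ e = (p - k * b, k)) \/
    (exists m, m <= p %/ binv /\ e = (m, p - m * binv)) ->
    in_inv p b e.
Proof.
move=> pp /andP [Hb0 Hbp] Hinv Hb Hle e.
have p0 := prime_gt0 pp.
have Hq : forall k, k <= p %/ b -> k * b <= p.
  by move=> k Hk; apply: leq_trans (leq_mul Hk (leqnn b)) _; rewrite leq_trunc_div.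
have Hs : forall m, m <= p %/ binv -> m * binv <= p.
  by move=> k Hk; apply: leq_trans (leq_mul Hk (leqnn binv)) _; rewrite leq_trunc_div.
case=> [[k [Hk ->]] | [m [Hm ->]]].
- have := Hq _ Hk => Hkb.
  split.
  + rewrite /invariant_mon /=; have -> : p - k * b + b * k = p by lia.
    by rewrite modnn.
  + rewrite /nonconstant; apply/eqP => [[H1 H2]]; subst k; move: H1; lia.
  + apply: (@nodec p b 1 b) => //=; first lia.
    by move=> f; rewrite /invariant_mon mul1n => /eqP; move/eqP; rewrite -/(dvdn p _).
- have := Hs _ Hm => Hmb.
  set j := b * binv %/ p.
  have Hx : b * binv = j * p + 1 by rewrite {1}(divn_eq (b*binv) p) Hinv.
  split.
  + rewrite /invariant_mon /=.
    have Hmj : m * j <= b.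
      have : b * (m * binv) <= b * p by rewrite leq_mul2l Hmb orbT.
      rewrite mulnCA Hx => H.
      have : m * j * p <= b * p by nia.
      by rewrite leq_mul2r; case/orP => // /eqP p00; move: p0; rewrite p00.
    have -> : m + b * (p - m * binv) = (b - m * j) * p.
      rewrite mulnBr mulnBl mulnCA Hx. nia.
    by rewrite modnMl.
  + rewrite /nonconstant; apply/eqP => [[H1 H2]]; subst m; move: H2; lia.
  + apply: (@nodec p b binv 1) => //=; first lia.
    move=> [f1 f2]; rewrite /invariant_mon /= mul1n => /eqP H.
    have Hd : p %| binv * (f1 + b * f2) by apply: dvdn_mull; rewrite /dvdn H.
    have E : binv * (f1 + b * f2) = (j * f2) * p + (binv * f1 + f2).
      rewrite mulnDr mulnCA mulnA Hx. nia.
    by rewrite -(dvdn_addr _ (dvdn_mull (j * f2) (dvdnn p))) -E.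
Qed.
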